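(* Let $D$ be a locatable digraph of order $n$ with $\gamma_{OL}(D)=n$. Let $x$ be an arbitrary vertex of $D$ and let $D'$ be the digraph obtained from $D$ by deleting all non-forcing arcs of $D$ whose tail is $x$. Then $D'$ is locatable and $\gamma_{OL}(D')=n$. Moreover, if $x$ is not location-forced in $D$, then $D$ and $D'$ have the same sets of forcing arcs.
   Context: Digraphs are finite and may contain loops; between two distinct vertices there may be arcs in one or both directions, no repeated arcs. $N^-(v)=\{u: uv\text{ is an arc}\}$ (contains $v$ iff $v$ has a loop). An OLD set of $D$ is a set $S\subseteq V(D)$ such that every vertex has an in-neighbour in $S$ and for every two distinct vertices $u,w$ some vertex of $S$ lies in exactly one of $N^-(u),N^-(w)$. $D$ is locatable if it has an OLD set, and then $\gamma_{OL}(D)$ is the minimum size of an OLD set. A vertex $v$ is location-forced if there are distinct vertices $y,z$ with $N^-(y)\ominus N^-(z)=\{v\}$ ($\ominus$ = symmetric difference). An arc $uy$ (possibly a loop) of a locatable digraph is a forcing arc if either $N^-(y)=\{u\}$, or there is a vertex $z$ with $N^-(z)=N^-(y)\setminus\{u\}$. *)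

(* Defs.v *)
From mathcomp Require Import all_boot.
Set Implicit Arguments. Unset Strict Implicit. Unset Printing Implicit Defensive.

(* A digraph on the finite vertex type T is an arc relation a : rel T;
   a u v means uv is an arc (loops allowed: a v v). *)
Section Digraphs.
Variable T : finType.
Implicit Types (a : rel T) (S : {set T}).

Definition inN a (v : T) : {set T} := [set u | a u v].

Definition symdiff (A B : {set T}) : {set T} := (A :\: B) :|: (B :\: A).

Definition is_OLD a S : bool :=
  [forall v, exists u in S, a u v] &&
  [forall u, forall w, (u != w) ==>
      [exists s in S, (s \in inN a u) != (s \in inN a w)]].

Definition locatable a : Prop := exists S, is_OLD a S.

(* minimum size of an OLD set (meaningful when a is locatable) *)
Definition gammaOL a : nat :=
  \big[minn/#|T|.+1]_(S : {set T} | is_OLD a S) #|S|.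

Definition location_forced a (v : T) : Prop :=
  exists y z, y != z /\ symdiff (inN a y) (inN a z) = [set v].

Definition forcing_arc a (u y : T) : Prop :=
  a u y /\ (inN a y = [set u] \/ exists z, inN a z = inN a y :\ u).

Definition forcing_arcb a (u y : T) : bool :=
  a u y && ((inN a y == [set u]) || [exists z, inN a z == inN a y :\ u]).

Definition delete_nonforcing_out a (x : T) : rel T :=
  fun u y => a u y && ((u != x) || forcing_arcb a u y).

End Digraphs.

(* Main.v *)
Require Import Defs.
From HB Require Import structures.
From mathcomp Require Import all_boot.
From mathcomp Require Import zify.
Set Implicit Arguments. Unset Strict Implicit. Unset Printing Implicit Defensive.

HB.instance Definition _ := SemiGroup.isComLaw.Build nat minn minnA minnC.

Section Gen.
Variable T : finType.
Implicit Types (b : rel T) (S : {set T}).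

Lemma E1 b y u : inN b y = [set u] <-> forall s, b s y = (s == u).
Proof.
split=> [H s | H]; last by apply/setP => s; rewrite !inE H.
by move/setP: H => /(_ s); rewrite !inE.
Qed.

Lemma E2 b y z u : inN b z = inN b y :\ u <-> forall s, b s z = (s != u) && b s y.
Proof.
split=> [H s | H]; last by apply/setP => s; rewrite !inE H.
by move/setP: H => /(_ s); rewrite !inE.
Qed.

Lemma forcingP b u y : forcing_arc b u y <-> forcing_arcb b u y.
Proof.
rewrite /forcing_arcb; split.
  move=> [-> [->|[z Hz]]]; first by rewrite eqxx.
  by apply/orP; right; apply/existsP; exists z; rewrite Hz.
by move=> /andP [H /orP [/eqP H1 | /existsP [z /eqP H1]]]; split=> //; [left|right; exists z].
Qed.

Lemma OLD_dom b S w : is_OLD b S -> exists u, u \in S /\ b u w.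
Proof. by move=> /andP [/forallP /(_ w) /existsP [u /andP [H1 H2]] _]; exists u. Qed.

Lemma OLD_sep b S u w : is_OLD b S -> u != w -> exists s, s \in S /\ b s u != b s w.
Proof.
move=> /andP [_ /forallP /(_ u) /forallP /(_ w) /implyP H] /H /existsP [s /andP [H1 H2]].
by exists s; rewrite !inE in H2.
Qed.

Lemma OLD_intro b : (forall w, exists u, b u w) ->
  (forall u w, u != w -> exists s, b s u != b s w) -> is_OLD b setT.
Proof.
move=> Hd Hs; apply/andP; split.
  by apply/forallP => w; have [u Hu] := Hd w; apply/existsP; exists u; rewrite inE.
apply/forallP => u; apply/forallP => w; apply/implyP => /Hs [s Hsu].
by apply/existsP; exists s; rewrite !inE.
Qed.

Lemma CD b S v w : is_OLD b S -> v \notin S -> (forall s, b s w -> s = v) -> False.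
Proof.
move=> /(OLD_dom w) [u [Hu Hb]] Hv H.
by move: Hu; rewrite (H _ Hb) (negbTE Hv).
Qed.

Lemma CS b S v y z : is_OLD b S -> v \notin S -> y != z ->
  (forall s, s != v -> b s y = b s z) -> False.
Proof.
move=> /OLD_sep H Hv /H [s [Hs Hb]] Hyz.
case: (eqVneq s v) => [Esv|Nsv]; first by move: Hs; rewrite Esv (negbTE Hv).
by move: Hb; rewrite Hyz // eqxx.
Qed.

Lemma gamma_all b : is_OLD b setT -> (forall S, is_OLD b S -> S = setT) -> gammaOL b = #|T|.
Proof.
move=> H1 H2; rewrite /gammaOL (bigD1 setT) //= cardsT.
rewrite big_pred0; first by apply/minn_idPl.
by move=> S; apply/negP => /andP [/H2 -> ]; rewrite eqxx.
Qed.

Lemma gamma_le b S : is_OLD b S -> gammaOL b <= #|S|.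
Proof. by move=> H; rewrite /gammaOL (bigD1 S) //= geq_minl. Qed.

Lemma gamma_eq b S : gammaOL b = #|T| -> is_OLD b S -> S = setT.
Proof.
move=> Hg HS; apply/eqP; apply/negPn/negP => Hn.
have := gamma_le HS; rewrite Hg.
have := proper_card (A := S) (B := setT); rewrite properT Hn cardsT => /(_ isT).
by move=> H1 H2; move: (leq_ltn_trans H2 H1); rewrite ltnn.
Qed.

Lemma imsetD1 (U : finType) (f : {set T} -> U) (X : {set {set T}}) A B :
  B \in X -> B != A -> f A = f B -> f @: X = f @: (X :\ A).
Proof.
move=> HB HBA Hf; apply/eqP; rewrite eqEsubset; apply/andP; split; last first.
  by apply: imsetS; apply: subsetDl.
apply/subsetP => y /imsetP [C HC ->].
case: (eqVneq C A) => [->|NCA]; first by rewrite Hf; apply: imset_f; rewrite !inE HBA.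
by apply: imset_f; rewrite !inE NCA.
Qed.

Lemma imset_lt (U : finType) (f : {set T} -> U) (X : {set {set T}}) A B :
  A \in X -> B \in X -> B != A -> f A = f B -> #|f @: X| < #|X|.
Proof.
move=> HA HB HBA Hf; rewrite (imsetD1 HB HBA Hf) (cardsD1 A X) HA add1n ltnS.
exact: leq_imset_card.
Qed.

Definition edges (W : {set T}) (F : {set {set T}}) :=
  forall v, v \in W -> exists P, [/\ P \in F, v \notin P & v |: P \in F].

Lemma edges_contract W F u : edges W F ->
  edges (W :\ u) [set S :\ u | S in F].
Proof.
move=> H v; rewrite !inE => /andP [Nvu /H [P [H1 H2 H3]]].
exists (P :\ u); split; first exact: imset_f.
  by rewrite !inE negb_and H2 orbT.
have -> : v |: (P :\ u) = (v |: P) :\ u.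
  by apply/setP => s; rewrite !inE; case: (eqVneq s v) => // ->; rewrite Nvu.
exact: imset_f.
Qed.

Lemma L1 n : forall (W : {set T}) (F : {set {set T}}), #|W| = n ->
  set0 \in F -> edges W F -> #|W| < #|F|.
Proof.
elim: n => [|n IH] W F HW H0 He.
  by rewrite HW card_gt0; apply/set0Pn; exists set0.
have : 0 < #|W| by rewrite HW.
rewrite card_gt0 => /set0Pn [v Hv].
have HW' : #|W :\ v| = n by move: HW; rewrite (cardsD1 v) Hv add1n => [[]].
have H0' : set0 \in [set S :\ v | S in F].
  by rewrite -(set0D [set v]); apply: imset_f.
have := IH _ _ HW' H0' (edges_contract (u:=v) He).
have [P [H1 H2 H3]] := He v Hv.
have Hlt : #|[set S :\ v | S in F]| < #|F|.
  apply: (imset_lt (A := v |: P) (B := P)) => //.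
    by apply/eqP => E; move: H2; rewrite E !inE eqxx.
  apply/setP => s; rewrite !inE; case: (eqVneq s v) => //= ->.
rewrite HW' => H; rewrite HW; exact: leq_ltn_trans H Hlt.
Qed.

End Gen.

Section Main.
Variables (T : finType) (a : rel T) (x : T).
Hypothesis hOLD : is_OLD a setT.
Hypothesis hall : forall S, is_OLD a S -> S = setT.

Local Notation a' := (delete_nonforcing_out a x).

Lemma dom w : exists u, a u w.
Proof. by have [u [_ H]] := OLD_dom w hOLD; exists u. Qed.

Lemma sep u w : u != w -> exists s, a s u != a s w.
Proof. by move=> H; have [s [_ Hs]] := OLD_sep hOLD H; exists s. Qed.

Lemma forced v : (exists w, forall s, a s w = (s == v)) \/
  (exists y z, [/\ a v y, ~~ a v z & forall s, s != v -> a s y = a s z]).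
Proof.
have Hn : ~~ is_OLD a (setT :\ v).
  by apply/negP => /hall E; move/setP: E => /(_ v); rewrite !inE eqxx.
rewrite /is_OLD negb_and in Hn.
case/orP: Hn => [/forallPn [w /existsPn Hw] | /forallPn [u /forallPn [w]]].
  left; exists w => s.
  have [u0 Hu0] := dom w.
  have Eu0 : u0 = v.
    by apply/eqP; apply/negPn/negP => Hne; move: (Hw u0); rewrite !inE Hne Hu0.
  case: (eqVneq s v) => [->|Nsv]; first by rewrite -Eu0 Hu0.
  by move: (Hw s); rewrite !inE Nsv /= => /negbTE.
rewrite negb_imply => /andP [Huw /existsPn Hs].
have Hs' : forall s, s != v -> a s u = a s w.
  by move=> s Nsv; move: (Hs s); rewrite !inE Nsv /= negbK => /eqP.
have [s0 Hs0] := sep Huw.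
have Es0 : s0 = v.
  by apply/eqP; apply/negPn/negP => Hne; move: Hs0; rewrite Hs' // eqxx.
rewrite Es0 in Hs0.
right; case Eu: (a v u).
  exists u, w; split=> //; first by move: Hs0; rewrite Eu; case: (a v w).
exists w, u; split; [by move: Hs0; rewrite Eu; case: (a v w) | by rewrite Eu | by move=> s /Hs' ->].
Qed.

Lemma a'_sub s t : a' s t -> a s t.
Proof. by case/andP. Qed.

Lemma a'_ne s t : s != x -> a' s t = a s t.
Proof. by move=> H; rewrite /delete_nonforcing_out H andbT. Qed.

Lemma a'_x t : a' x t = forcing_arcb a x t.
Proof. by rewrite /delete_nonforcing_out eqxx /= /forcing_arcb; case: (a x t). Qed.

Lemma fb1 t : (forall s, a s t = (s == x)) -> forcing_arcb a x t.
Proof. by move=> H; apply/forcingP; split; [rewrite H eqxx | left; apply/E1]. Qed.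

Lemma fb2 t z : a x t -> (forall s, a s z = (s != x) && a s t) -> forcing_arcb a x t.
Proof. by move=> H1 H2; apply/forcingP; split=> //; right; exists z; apply/E2. Qed.

Lemma fbE t : forcing_arcb a x t -> (forall s, a s t = (s == x)) \/
  exists z, forall s, a s z = (s != x) && a s t.
Proof.
move/forcingP => [_ [/E1 H | [z /E2 H]]]; first by left.
by right; exists z.
Qed.

Lemma part1 : is_OLD a' setT.
Proof.
apply: OLD_intro.
  move=> w; case: (pickP (fun u => (u != x) && a u w)) => [u /andP [Hu Ha] | Hn].
    by exists u; rewrite a'_ne.
  exists x; rewrite a'_x; apply: fb1 => s.
  have [u0 Hu0] := dom w.
  have Eu0 : u0 = x.
    by apply/eqP; apply/negPn/negP => Hne; move: (Hn u0); rewrite Hne Hu0.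
  case: (eqVneq s x) => [->|Nsx]; first by rewrite -Eu0 Hu0.
  by move: (Hn s); rewrite Nsx.
have K : forall u w, a x u -> ~~ a x w -> (forall s, s != x -> a s u = a s w) ->
    a' x u && ~~ a' x w.
  move=> u w H1 H2 H3; apply/andP; split.
    rewrite a'_x; apply: (fb2 (z := w)) => // s.
    by case: (eqVneq s x) => [->|Nsx] /=; [apply/negbTE | rewrite H3].
  by apply/negP => /a'_sub; apply/negP.
move=> u w Huw.
case: (pickP (fun s => a' s u != a' s w)) => [s Hs | Hn]; first by exists s.
have Hn' : forall s, a' s u = a' s w by move=> s; move: (Hn s) => /negbFE /eqP.
have [s0 Hs0] := sep Huw.
have Es0 : s0 = x.
  by apply/eqP; apply/negPn/negP => Hne; move: Hs0; rewrite -!a'_ne // Hn' eqxx.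
rewrite Es0 in Hs0.
have H3 : forall s, s != x -> a s u = a s w by move=> s Hs; rewrite -!a'_ne.
case Eu: (a x u); rewrite Eu in Hs0.
  have := K u w Eu Hs0 H3; rewrite Hn' => /andP [->]; by [].
have Ew : a x w by move: Hs0; case: (a x w).
have := K w u Ew (negbT Eu) (fun s Hs => esym (H3 s Hs)); rewrite Hn' => /andP [->]; by [].
Qed.

Lemma part2 S : is_OLD a' S -> S = setT.
Proof.
move=> HS; apply/setP => v; rewrite inE; apply/negPn/negP => Hv.
case: (forced v) => [[w Hw] | [y [z [Hy Hz Hs]]]].
  by apply: (CD HS Hv (w := w)) => s /a'_sub; rewrite Hw => /eqP.
have Hyz : y != z by apply/eqP => E; move: Hz; rewrite -E Hy.
case: (eqVneq v x) => [Evx | Nvx].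
  by apply: (CS HS Hv Hyz) => s Hsv; rewrite !a'_ne -?Evx // Hs.
have Hxs : a x z = a x y by rewrite Hs // eq_sym.
case Exy: (a x y).
  case Efy: (a' x y); case Efz: (a' x z).
  - by apply: (CS HS Hv Hyz) => s Hsv; case: (eqVneq s x) => [->|Nsx]; rewrite ?Efy ?Efz // !a'_ne // Hs.
  - move: Efy; rewrite a'_x => /fbE [H|[z' H]]; first by move: Hy; rewrite H (negbTE Nvx).
    have Hz'z : z' != z.
      by apply/eqP => E; move: Hz; rewrite -E H Nvx Hy.
    apply: (CS HS Hv Hz'z) => s Hsv.
    case: (eqVneq s x) => [->|Nsx]; last by rewrite !a'_ne // H Nsx Hs.
    by rewrite Efz; apply: negbTE; apply/negP => /a'_sub; rewrite H eqxx.
  - move: Efz; rewrite a'_x => /fbE [H|[w H]].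
      apply: (CD HS Hv (w := y)) => s.
      case: (eqVneq s x) => [->|Nsx]; first by rewrite Efy.
      rewrite a'_ne //; case: (eqVneq s v) => // Nsv.
      by rewrite Hs // H (negbTE Nsx).
    have Hyw : y != w by apply/eqP => E; move: Hy; rewrite E H Nvx (negbTE Hz).
    apply: (CS HS Hv Hyw) => s Hsv.
    case: (eqVneq s x) => [->|Nsx]; last by rewrite !a'_ne // H Nsx Hs.
    by rewrite Efy; apply/esym; apply: negbTE; apply/negP => /a'_sub; rewrite H eqxx.
  - by apply: (CS HS Hv Hyz) => s Hsv; case: (eqVneq s x) => [->|Nsx]; rewrite ?Efy ?Efz // !a'_ne // Hs.
apply: (CS HS Hv Hyz) => s Hsv.
case: (eqVneq s x) => [->|Nsx]; last by rewrite !a'_ne // Hs.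
have Fy : a' x y = false by apply: negbTE; apply/negP => /a'_sub; rewrite Exy.
have Fz : a' x z = false by apply: negbTE; apply/negP => /a'_sub; rewrite Hxs Exy.
by rewrite Fy Fz.
Qed.


Hypothesis hnlf : ~ location_forced a x.

Lemma lf_intro y z : a x y -> ~~ a x z -> (forall s, s != x -> a s y = a s z) ->
  location_forced a x.
Proof.
move=> Hy Hz Hs; exists y, z; split.
  by apply/eqP => E; move: Hz; rewrite -E Hy.
apply/setP => s; rewrite /symdiff !inE.
case: (eqVneq s x) => [->|Nsx]; first by rewrite Hy (negbTE Hz).
by rewrite Hs //; case: (a s z).
Qed.

Lemma w0_ex : exists w0, forall s, a s w0 = (s == x).
Proof.
case: (forced x) => [//|[y [z [Hy Hz Hs]]]].
by case: hnlf; apply: (lf_intro Hy Hz Hs).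
Qed.

Lemma fbx t : forcing_arcb a x t -> forall s, a s t = (s == x).
Proof.
move=> H; have Ht : a x t by case/andP: H.
case: (fbE H) => [//|[z Hz]].
case: hnlf; apply: (lf_intro (z := z) Ht); first by rewrite Hz eqxx.
by move=> s Hs; rewrite Hz Hs.
Qed.

Definition F0 : {set {set T}} := set0 |: [set inN a v | v in T].

Lemma inN_F0 v : inN a v \in F0.
Proof. by rewrite /F0 !inE; apply/orP; right; apply: imset_f. Qed.

Lemma set0_F0 : set0 \in F0.
Proof. by rewrite /F0 !inE eqxx. Qed.

Lemma card_F0 : #|F0| = #|T|.+1.
Proof.
rewrite /F0 cardsU1 card_imset.
  have -> : set0 \notin [set inN a v | v in T].
    apply/negP => /imsetP [v _ E]; have [u Hu] := dom v.
    by move/setP: E => /(_ u); rewrite !inE Hu.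
  by [].
move=> u w E; apply/eqP; apply/negPn/negP => /sep [s].
by move/setP: E => /(_ s); rewrite !inE => ->; rewrite eqxx.
Qed.

Lemma edges_F0 : edges setT F0.
Proof.
move=> v _; case: (forced v) => [[w Hw] | [y [z [Hy Hz Hs]]]].
  exists set0; split; [exact: set0_F0 | by rewrite inE | ].
  rewrite setU0; have <- : inN a w = [set v] by apply/E1.
  exact: inN_F0.
exists (inN a z); split; [exact: inN_F0 | by rewrite inE | ].
have -> : v |: inN a z = inN a y.
  apply/setP => s; rewrite !inE; case: (eqVneq s v) => [->|Nsv] /=; first by rewrite Hy.
  by rewrite Hs.
exact: inN_F0.
Qed.

Lemma CL u P Q : u != x -> P \in F0 -> Q \in F0 -> x \notin P :\ u ->
  Q :\ u = x |: (P :\ u) -> P :\ u != set0 -> False.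
Proof.
move=> Hux HP HQ HxP HQP HP0.
set G := [set S :\ u | S in F0].
set H := [set S :\ x | S in G].
have HG : #|G| < #|F0|.
  have [P1 [H1 H2 H3]] := edges_F0 (in_setT u).
  apply: (imset_lt (A := u |: P1) (B := P1)) => //.
    by apply/eqP => E; move: H2; rewrite E !inE eqxx.
  apply/setP => s; rewrite !inE; case: (eqVneq s u) => //= ->.
have [w0 Hw0] := w0_ex.
have Hx : [set x] \in G.
  have -> : [set x] = inN a w0 :\ u.
    apply/setP => s; rewrite !inE Hw0; case: (eqVneq s x) => [->|]; [by rewrite eq_sym Hux | by rewrite andbF].
  by apply: imset_f; apply: inN_F0.
have H0 : set0 \in G by rewrite -(set0D [set u]); apply: imset_f; apply: set0_F0.
have HH : H = [set S :\ x | S in G :\ [set x]].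
  apply: (imsetD1 (B := set0)) => //.
    by apply/eqP => E; move/setP: E => /(_ x); rewrite !inE eqxx.
  by rewrite setDv set0D.
have HPG : P :\ u \in G by apply: imset_f.
have HQG : x |: (P :\ u) \in G by rewrite -HQP; apply: imset_f.
have HHlt : #|H| < #|G :\ [set x]|.
  rewrite HH; apply: (imset_lt (A := x |: (P :\ u)) (B := P :\ u)).
  - rewrite !inE HQG andbT; apply/negP => /eqP E.
    case/set0Pn: HP0 => s Hs.
    have : s \in [set x] by rewrite -E inE Hs orbT.
    by rewrite inE => /eqP Esx; move: HxP; rewrite -Esx Hs.
  - rewrite !inE HPG andbT; apply/negP => /eqP E.
    by move: HxP; rewrite E inE eqxx.
  - by apply/negP => /eqP E; move: HxP; rewrite E !inE eqxx.
  - by apply/setP => s; rewrite !inE; case: (eqVneq s x).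
have HW : edges (setT :\ u :\ x) H by apply: edges_contract; apply: edges_contract; exact: edges_F0.
have H0H : set0 \in H by rewrite -(set0D [set x]); apply: imset_f.
have := L1 (erefl _) H0H HW.
have := cardsD1 u (setT : {set T}); rewrite in_setT cardsT.
have := cardsD1 x (setT :\ u); rewrite !inE eq_sym Hux.
have := cardsD1 [set x] G; rewrite Hx.
rewrite card_F0 in HG.
move=> /= E1 E2 E3 E4.
have E5 := leq_ltn_trans E4 HHlt.
move: HG E5; rewrite E1 E3 E2.
set k := #|G :\ [set x]|; set m := #|[set: T] :\ u :\ x|.
lia.
Qed.

Theorem part3 u y : forcing_arc a u y <-> forcing_arc a' u y.
Proof.
case: (eqVneq u x) => [->|Hux].
  split.
    move=> [Ha [H1|[z H1]]].
      have H1' := proj1 (E1 _ _ _) H1.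
      have Hf : a' x y by rewrite a'_x; apply: fb1.
      split=> //; left; apply/E1 => s.
      case: (eqVneq s x) => [->|Nsx]; first by rewrite Hf.
      by rewrite a'_ne // H1' (negbTE Nsx).
    have H1' := proj1 (E2 _ _ _ _) H1.
    case: hnlf; apply: (lf_intro (z := z) Ha); first by rewrite H1' eqxx.
    by move=> s Hs; rewrite H1' Hs.
  by move=> [Ha _]; rewrite a'_x in Ha; apply/forcingP.
have Fxy : a u y -> a' x y = false.
  move=> Ha; apply: negbTE; apply/negP; rewrite a'_x => /fbx H.
  by move: Ha; rewrite H (negbTE Hux).
split.
  move=> [Ha [H1|[z H1]]].
  - have H1' := proj1 (E1 _ _ _) H1.
    split; first by rewrite a'_ne.
    left; apply/E1 => s; case: (eqVneq s x) => [->|Nsx].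
      by rewrite Fxy // eq_sym (negbTE Hux).
    by rewrite a'_ne.
  - have H1' := proj1 (E2 _ _ _ _) H1.
    split; first by rewrite a'_ne.
    case Hfz: (forcing_arcb a x z).
      have Hz := fbx Hfz.
      left; apply/E1 => s; case: (eqVneq s x) => [->|Nsx].
        by rewrite Fxy // eq_sym (negbTE Hux).
      rewrite a'_ne //; case: (eqVneq s u) => [->|Nsu]; first by [].
      by move: (H1' s); rewrite Hz (negbTE Nsx) Nsu.
    right; exists z; apply/E2 => s; case: (eqVneq s x) => [->|Nsx].
      by rewrite a'_x Hfz Fxy // andbF.
    by rewrite !a'_ne.
move=> [Ha' H].
have Ha : a u y by rewrite -a'_ne.
split=> //.
case: H => [H1|[z H1]].
  have H1' := proj1 (E1 _ _ _) H1.
  case Exy: (a x y).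
    right; have [w0 Hw0] := w0_ex; exists w0; apply/E2 => s.
    rewrite Hw0; case: (eqVneq s x) => [->|Nsx]; first by rewrite eq_sym Hux Exy.
    by rewrite -a'_ne // H1'; case: (eqVneq s u).
  left; apply/E1 => s; case: (eqVneq s x) => [->|Nsx].
    by rewrite Exy eq_sym (negbTE Hux).
  by rewrite -a'_ne.
have H1' := proj1 (E2 _ _ _ _) H1.
have Hz : forall s, s != x -> a s z = (s != u) && a s y.
  by move=> s Hs; rewrite -!a'_ne // H1'.
have Hxz : a' x z = false by rewrite H1' Fxy // andbF.
case Exy: (a x y); case Exz: (a x z).
- right; exists z; apply/E2 => s; case: (eqVneq s x) => [->|Nsx].
    by rewrite Exy Exz eq_sym Hux.
  by rewrite Hz.
- exfalso; apply: (CL (P := inN a z) (Q := inN a y) Hux (inN_F0 z) (inN_F0 y)).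
  + by rewrite !inE Exz andbF.
  + apply/setP => s; rewrite !inE; case: (eqVneq s x) => [->|Nsx] /=.
      by rewrite eq_sym Hux Exy.
    by rewrite Hz //; case: (s != u).
  + have [s0 Hs0] := dom z.
    apply/set0Pn; exists s0; rewrite !inE Hs0 andbT.
    have Ns0x : s0 != x by apply/eqP => E; move: Hs0; rewrite E Exz.
    by move: Hs0; rewrite Hz // => /andP [].
- exfalso; apply: (CL (P := inN a y) (Q := inN a z) Hux (inN_F0 y) (inN_F0 z)).
  + by rewrite !inE Exy andbF.
  + apply/setP => s; rewrite !inE; case: (eqVneq s x) => [->|Nsx] /=.
      by rewrite eq_sym Hux Exz.
    by rewrite Hz //; case: (s != u).
  + apply/negP => /eqP E.
    have : forcing_arcb a x z.
      apply: fb1 => s; case: (eqVneq s x) => [->|Nsx]; first by rewrite Exz.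
      rewrite Hz //; move/setP: E => /(_ s); rewrite !inE => ->.
      by [].
    by rewrite -a'_x Hxz.
- right; exists z; apply/E2 => s; case: (eqVneq s x) => [->|Nsx].
    by rewrite Exy Exz andbF.
  by rewrite Hz.
Qed.

End Main.


Theorem lemma10 (T : finType) (a : rel T) (x : T) :
  locatable a -> gammaOL a = #|T| ->
  let a' := delete_nonforcing_out a x in
  locatable a' /\ gammaOL a' = #|T| /\
  (~ location_forced a x ->
     forall u y, forcing_arc a u y <-> forcing_arc a' u y).
Proof.
move=> [S HS] Hg a'.
have hall : forall S', is_OLD a S' -> S' = setT by move=> S'; apply: gamma_eq.
have hOLD : is_OLD a setT by rewrite -(hall S HS).
split; first by exists setT; exact: (part1 x hOLD).
split; first by apply: gamma_all; [exact: (part1 x hOLD) | move=> S'; exact: (part2 hOLD hall)].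
by move=> Hn u y; exact: (part3 hOLD hall Hn).
Qed.
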